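(* There is a function $\rho(\theta)$ with $\rho(\theta)\to1/3$ as $\theta\to0$ such that on every instance with largeness ratio $\theta$, the winning set $\chi_k$ selected by the polynomial-time mechanism described in the context satisfies $F(\chi_k)\ge\rho(\theta)F^\star$; i.e., the mechanism has approximation ratio $1/3$ in large markets.
   Context: Sellers $S=\{1,\dots,n\}$ each own one indivisible item and have a cost $c_i\ge0$. The buyer's utility is a monotone submodular $F:2^S\to\mathbb R_{\ge0}$, budget $B>0$; $c(T)=\sum_{i\in T}c_i$. $F^\star=\max\{F(T):c(T)\le B\}>0$; the largeness ratio is $\theta=\max_{s}F(\{s\})/F^\star$. Greedy sequence $\chi(F)=\langle x_1,\dots,x_n\rangle$: with $\chi_0=\emptyset$, $\chi_i=\{x_1,\dots,x_i\}$, $x_i$ maximizes $(F(\chi_{i-1}\cup\{s\})-F(\chi_{i-1}))/c_s$ over $s\notin\chi_{i-1}$ (ratio $+\infty$ if $c_s=0$; ties arbitrary); $\partial_i=F(\chi_i)-F(\chi_{i-1})$. Mechanism (winner selection): construct $\chi(F)$, let $k$ be the largest integer such that $F(\chi_k)\cdot c_{x_k}/\partial_k\le B/2$, and declare $\chi_k$ the set of winners. *)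

(* Defs.v *)
From HB Require Import structures.
From mathcomp Require Import all_boot all_order all_algebra.
From mathcomp Require Import all_classical all_reals all_analysis.
Set Implicit Arguments. Unset Strict Implicit. Unset Printing Implicit Defensive.
Import Order.TTheory GRing.Theory Num.Theory.
Local Open Scope ring_scope.

Section Market.
Variables (R : realType) (n : nat).
Implicit Types (F : {set 'I_n} -> R) (c : 'I_n -> R) (A T : {set 'I_n}).

Definition monotone_set F := forall A T, A \subset T -> F A <= F T.

Definition submodular F := forall A T, F (A :|: T) + F (A :&: T) <= F A + F T.

Definition cost c T := \sum_(i in T) c i.

(* F^* = max { F(T) : c(T) <= B }  (F >= 0, and the empty set is feasible) *)
Definition Fstar c F (B : R) := \big[Num.max/0]_(T : {set 'I_n} | cost c T <= B) F T.

Definition theta c F (B : R) := (\big[Num.max/0]_(s : 'I_n) F [set s]) / Fstar c F B.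

Definition marg F A (s : 'I_n) := F (s |: A) - F A.

(* "ratio of s >= ratio of t" w.r.t. A, with ratio +oo when the cost is 0 *)
Definition ratio_ge c F A (s t : 'I_n) : Prop :=
  c s = 0 \/ (c t != 0 /\ marg F A t / c t <= marg F A s / c s).

(* xs = <x_1,...,x_n> is a greedy sequence chi(F) (ties arbitrary):
   it enumerates all sellers, and the item in position i+1 maximizes the
   ratio among the sellers not in chi_i *)
Definition is_greedy c F (xs : seq 'I_n) : Prop :=
  perm_eq xs (enum 'I_n) /\
  forall i (x : 'I_n) rest, drop i xs = x :: rest ->
    forall t, t \notin take i xs -> ratio_ge c F [set y in take i xs] x t.

Definition chi (xs : seq 'I_n) (i : nat) : {set 'I_n} := [set y in take i xs].

(* the condition  F(chi_i) * c_{x_i} / partial_i <= B/2  (cross-multiplied;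
   i = 0 is the trivial fallback chi_0 = emptyset) *)
Definition sel_ok c F (B : R) (xs : seq 'I_n) (i : nat) : Prop :=
  i = 0%N \/
  exists (x : 'I_n) rest, drop i.-1 xs = x :: rest /\
    F (chi xs i) * c x <= B / 2 * (F (chi xs i) - F (chi xs i.-1)).

Definition is_winner_index c F (B : R) (xs : seq 'I_n) (k : nat) : Prop :=
  (k <= n)%N /\ sel_ok c F B xs k /\
  forall j, (k < j <= n)%N -> ~ sel_ok c F B xs j.

End Market.

(* Main.v *)
Require Import Defs.
From HB Require Import structures.
From mathcomp Require Import all_boot all_order all_algebra.
From mathcomp Require Import all_classical all_reals all_analysis.
From mathcomp Require Import ring lra.
Import Order.TTheory GRing.Theory Num.Theory.
Import numFieldNormedType.Exports.
Local Open Scope classical_set_scope.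
Local Open Scope ring_scope.

Lemma rho_cvg (R : realType) :
  (fun x : R => 3^-1 * (1 - 2 * x)) x @[x --> (0:R)^'+] --> ((3%:R)^-1 : R).
Proof.
apply: cvg_at_right_filter.
have {2}-> : ((3%:R)^-1 : R) = 3^-1 * (1 - 2 * 0) by rewrite mulr0 subr0 mulr1.
apply: cvgM; first exact: cvg_cst.
apply: cvgB; first exact: cvg_cst.
apply: cvgM; first exact: cvg_cst.
exact: cvg_id.
Qed.

Lemma bigmax_att (R : realType) (I : finType) (P : pred I) (G : I -> R) :
  \big[Num.max/0]_(i | P i) G i = 0 \/
  exists i, P i /\ G i = \big[Num.max/0]_(i | P i) G i.
Proof.
apply: (big_ind (fun x => x = 0 \/ exists i, P i /\ G i = x)).
- by left.
- move=> x y Hx Hy; rewrite maxEle; by case: ifP.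
- move=> i Pi; right; by exists i.
Qed.

Lemma bigmax_ge0 (R : realType) (I : finType) (P : pred I) (G : I -> R) :
  (forall i, 0 <= G i) -> 0 <= \big[Num.max/0]_(i | P i) G i.
Proof.
move=> HG; apply: (big_ind (fun x => 0 <= x)) => //.
move=> x y Hx Hy; rewrite maxEle; by case: ifP.
Qed.

Lemma seq_bound (R : realType) (n : nat) (F : {set 'I_n} -> R) (A : {set 'I_n})
  (s : seq 'I_n) :
  monotone_set F -> submodular F ->
  F (A :|: [set x in s]) <= F A + \sum_(o <- s) marg F A o.
Proof.
move=> Hmon Hsub; elim: s => [|o s IH].
  have -> : [set x in [::] : seq 'I_n] = finset.set0 by apply/finset.setP => y; rewrite !inE.
  by rewrite finset.setU0 big_nil addr0.
rewrite big_cons.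
have -> : A :|: [set x in o :: s] = (o |: A) :|: (A :|: [set x in s]).
  by apply/finset.setP => y; rewrite !inE; case: (y == o); case: (y \in A); case: (y \in s).
have H1 := Hsub (o |: A) (A :|: [set x in s]).
have H2 : F A <= F ((o |: A) :&: (A :|: [set x in s])).
  apply: Hmon; apply/fintype.subsetP => y Hy; rewrite !inE Hy; by rewrite orbT.
rewrite /marg; lra.
Qed.

Theorem lemma21 (R : realType) :
  exists rho : R -> R,
    (rho x @[x --> (0:R)^'+] --> ((3%:R)^-1 : R)) /\
    forall (n : nat) (c : 'I_n -> R) (F : {set 'I_n} -> R) (B : R),
      (forall i, 0 <= c i) ->
      (forall A, 0 <= F A) ->
      F finset.set0 = 0 ->
      monotone_set F ->
      submodular F ->
      0 < B ->
      0 < Fstar c F B ->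
      forall (xs : seq 'I_n) (k : nat),
        is_greedy c F xs ->
        is_winner_index c F B xs k ->
        rho (theta c F B) * Fstar c F B <= F (chi xs k).
Proof.
exists (fun x : R => 3^-1 * (1 - 2 * x)); split; first exact: rho_cvg.
move=> n c F B Hc HF HF0 Hmon Hsub HB HFs xs k [Hperm Hg] [Hkn [_ Hmax]].
set Fs := Fstar c F B in HFs *.
set m := \big[Num.max/0]_(s : 'I_n) F [set s]%SET.
have Hm0 : 0 <= m by apply: bigmax_ge0.
have Hth : theta c F B = m / Fs by [].
rewrite Hth.
have -> : 3^-1 * (1 - 2 * (m / Fs)) * Fs = 3^-1 * (Fs - 2 * m).
  by rewrite mulrBr mulrBr mulr1 mulrBl -!mulrA mulVf ?mulr1 // gt_eqF.
suff key : Fs <= 3 * F (chi xs k) + 2 * m by lra.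
have [Op [HO HFO]] : exists Op, cost c Op <= B /\ F Op = Fs.
  case: (@bigmax_att R _ (fun T => cost c T <= B) F) => H.
    by move: HFs; rewrite /Fs /Fstar H ltxx.
  exact: H.
have Hsz : size xs = n by rewrite (perm_size Hperm) size_enum_ord.
have Hk0 : 0 <= F (chi xs k) by [].
case: (ltnP k n) => Hkn'; last first.
  have Hk : k = n by apply/eqP; rewrite eqn_leq Hkn Hkn'.
  have -> : chi xs k = finset.setT.
    apply/finset.setP => y; rewrite !inE take_oversize ?Hsz ?Hk // (perm_mem Hperm) mem_enum.
    by [].
  have : F Op <= F finset.setT by apply: Hmon; apply: finset.subsetT.
  lra.
case E : (drop k xs) => [|x rest].
  by move: (congr1 size E); rewrite size_drop Hsz /=; move/eqP; rewrite subn_eq0 leqNgt Hkn'.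
have Htk : size (take k xs) = k by rewrite size_take Hsz Hkn'.
have Hchi1 : chi xs k.+1 = x |: chi xs k.
  rewrite /chi.
  have -> : take k.+1 xs = take k xs ++ [:: x].
    rewrite -{1}(cat_take_drop k xs) E take_cat Htk ltnNge leqnSn /= subSnn.
    by rewrite [take 1 _]/= take0.
  by apply/finset.setP => y; rewrite !inE mem_cat mem_seq1 orbC.
have Hfail : B / 2 * (F (chi xs k.+1) - F (chi xs k)) < F (chi xs k.+1) * c x.
  rewrite ltNge; apply/negP => H; apply: (Hmax k.+1); first by rewrite ltnSn Hkn'.
  by right; exists x, rest; split.
set Fk := F (chi xs k) in Hk0 Hfail *.
set Fk1 := F (chi xs k.+1) in Hfail *.
have Hd : Fk <= Fk1 by apply: Hmon; rewrite Hchi1; apply: finset.subsetUr.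
have Hcx : 0 < c x.
  rewrite lt_neqAle Hc andbT; apply/negP => /eqP H0; move: Hfail; rewrite -H0 mulr0.
  have : 0 <= B / 2 * (Fk1 - Fk) by apply: mulr_ge0; lra.
  lra.
set S := Op :\: chi xs k.
have Hmarg : forall o, o \in S -> marg F (chi xs k) o * c x <= (Fk1 - Fk) * c o.
  move=> o; rewrite /S finset.in_setD => /andP [Hno Ho].
  have Hno' : o \notin take k xs by move: Hno; rewrite /chi inE.
  case: (Hg k x rest E o Hno') => [H0 | [Hco H]]; first by move: Hcx; rewrite H0 ltxx.
  have Hcop : 0 < c o by rewrite lt_neqAle eq_sym Hco Hc.
  change [set y in take k xs] with (chi xs k) in H.
  have Hmx : marg F (chi xs k) x = Fk1 - Fk by rewrite /marg -Hchi1.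
  rewrite Hmx in H.
  move: H; rewrite ler_pdivrMr // mulrAC ler_pdivlMr //.
have Hsum : (\sum_(o in S) marg F (chi xs k) o) * c x <= (Fk1 - Fk) * B.
  rewrite mulr_suml.
  apply: (@le_trans _ _ (\sum_(o in S) (Fk1 - Fk) * c o)).
    by apply: ler_sum => o Ho; exact: Hmarg.
  rewrite -mulr_sumr; apply: ler_wpM2l; first lra.
  apply: le_trans HO.
  rewrite /cost [X in _ <= X](big_setID (chi xs k)) /= -/S lerDr.
  by apply: sumr_ge0.
have HU : F Op <= Fk + \sum_(o in S) marg F (chi xs k) o.
  have := @seq_bound R n F (chi xs k) (enum S) Hmon Hsub; rewrite big_enum.
  apply: le_trans; apply: Hmon.
  apply/fintype.subsetP => y Hy; rewrite finset.in_setU inE ?mem_enum /S.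
  case: (boolP (y \in take k xs)) => //= H; by rewrite inE mem_enum finset.in_setD Hy andbT /chi inE H.
have Hsing : Fk1 <= Fk + m.
  have := Hsub [set x]%SET (chi xs k).
  have := HF ([set x]%SET :&: chi xs k).
  have : F [set x]%SET <= m by exact: (le_bigmax 0 (fun s => F [set s]%SET) x).
  rewrite /Fk1 Hchi1.
  rewrite /Fk; lra.
have Hlt : (\sum_(o in S) marg F (chi xs k) o) * c x < (2 * Fk1) * c x.
  have Heq : (Fk1 - Fk) * B = 2 * (B / 2 * (Fk1 - Fk)) by field.
  lra.
rewrite ltr_pM2r // in Hlt.
lra.
Qed.
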